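(* Let $\mu\in GF(q)\setminus\{0\}$ with $b:=\mu^2\neq1$. Then the $2(q+1)$ common tangent circles of $\mathcal B_1$ and $\mathcal B_b$ are exactly the circles in $$\{\mathcal B^1_{(sP,c)}:P\in\mathcal B_1\}\ \cup\ \{\mathcal B^1_{(s'P,c')}:P\in\mathcal B_1\},$$ where $s=\frac{1+\mu}2$, $c=\left(\frac{1-\mu}2\right)^2$, $s'=\frac{1-\mu}2$, $c'=\left(\frac{1+\mu}2\right)^2$. Moreover, for every $P\in\mathcal B_1$ we have $P,\mu P\in\mathcal B^1_{(sP,c)}$ and $P,-\mu P\in\mathcal B^1_{(s'P,c')}$.
   Context: Let $p$ be an odd prime, $m\ge1$, and $q=p^m$. $GF(q^2)$ denotes the quadratic extension of $GF(q)$, and for $z\in GF(q^2)$ we write $\bar z:=z^{q}$. The Miquelian Möbius plane $\mathbb M(q)$ has point set $GF(q^2)\cup\{\infty\}$ and circles of two types: for $s\in GF(q^2)$ and $c\in GF(q)\setminus\{0\}$, the circle of the first type $\mathcal B^1_{(s,c)}=\{z\in GF(q^2):(z-s)(\bar z-\bar s)=c\}$; for $s\in GF(q^2)\setminus\{0\}$ and $c\in GF(q)$, the circle of the second type $\mathcal B^2_{(s,c)}=\{z\in GF(q^2):\bar s z+s\bar z=c\}\cup\{\infty\}$. Two circles are called tangential if they have exactly one point in common. For $a\in GF(q)\setminus\{0\}$ put $\mathcal B_a:=\mathcal B^1_{(0,a)}$; so $\mathcal B_1=\{z: z\bar z=1\}$. *)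

(* Defs.v *)
(* The Miquelian Moebius plane M(q) over a finite field F
   of order q^2 (q = p^m, p odd prime).  Points are [option F], None = infinity. *)
From HB Require Import structures.
From mathcomp Require Import all_boot all_order all_algebra all_field.
Set Implicit Arguments. Unset Strict Implicit. Unset Printing Implicit Defensive.
Import GRing.Theory.
Local Open Scope ring_scope.

Section Moebius.
Variables (F : finFieldType) (q : nat).

Definition conj (z : F) : F := z ^+ q.

Definition inGFq (z : F) : bool := z ^+ q == z.

Definition circle1 (s c : F) : {set option F} :=
  [set x : option F | if x is Some z then (z - s) * (conj z - conj s) == c else false].

Definition circle2 (s c : F) : {set option F} :=
  [set x : option F | if x is Some z then conj s * z + s * conj z == c else true].

Definition is_circle (C : {set option F}) : bool :=
  [exists s : F, exists c : F,
     ([&& inGFq c, c != 0 & C == circle1 s c]) ||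
     ([&& s != 0, inGFq c & C == circle2 s c])].

Definition tangential (C D : {set option F}) : bool := #|C :&: D| == 1%N.

Definition Bcirc (a : F) : {set option F} := circle1 0 a.

Definition common_tangents (C D : {set option F}) : {set {set option F}} :=
  [set E : {set option F} | [&& is_circle E, tangential E C & tangential E D]].

End Moebius.

(* Main.v *)
Require Import Defs.
From HB Require Import structures.
From mathcomp Require Import all_boot all_order all_algebra all_field.
From mathcomp Require Import all_solvable.
From mathcomp Require Import ring.
Import GRing.Theory.
Local Open Scope ring_scope.
Section H.
Variables (p m q : nat) (F : finFieldType).
Hypotheses (hp : prime p) (hpodd : odd p) (hm : (1 <= m)%N) (hq : q = (p ^ m)%N)
  (hchar : p \in [pchar F]) (hcard : #|F| = (q ^ 2)%N).

Local Notation cj := (@conj F q).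

Lemma q_gt0 : (0 < q)%N.
Proof. by rewrite hq expn_gt0 prime_gt0. Qed.

Lemma cjD x y : cj (x + y) = cj x + cj y.
Proof.
rewrite /conj exprDn_pchar // hq pnatX pnatE //.
by rewrite (pcharf_eq hchar) inE eqxx.
Qed.

Lemma cj0 : cj 0 = 0.
Proof. by rewrite /conj expr0n eqn0Ngt q_gt0. Qed.

Lemma cj1 : cj 1 = 1.
Proof. by rewrite /conj expr1n. Qed.

Lemma cjM x y : cj (x * y) = cj x * cj y.
Proof. by rewrite /conj exprMn. Qed.

Lemma cjN x : cj (- x) = - cj x.
Proof. by apply/eqP; rewrite -addr_eq0 -cjD addNr cj0. Qed.

Lemma cjB x y : cj (x - y) = cj x - cj y.
Proof. by rewrite cjD cjN. Qed.

Lemma cjn n : cj n%:R = n%:R.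
Proof. by elim: n => [|n IH]; rewrite ?cj0 // -addn1 natrD cjD IH cj1. Qed.

Lemma cjV x : cj (x^-1) = (cj x)^-1.
Proof. by rewrite /conj exprVn. Qed.

Lemma cjK x : cj (cj x) = x.
Proof. by rewrite /conj -exprM mulnn -hcard expf_card. Qed.

Lemma cj_eq0 x : (cj x == 0) = (x == 0).
Proof. by rewrite /conj expf_eq0 q_gt0. Qed.

Lemma two_neq0 : (2%:R : F) != 0.
Proof.
apply/negP => h2.
have := pcharf_eq hchar 2; rewrite !inE h2 andbT /=.
move=> h; move: hpodd; rewrite -(eqP (esym h)).
by [].
Qed.

Lemma four_neq0 : (4%:R : F) != 0.
Proof. by rewrite -[4%N]/(2 * 2)%N natrM mulf_neq0 // two_neq0. Qed.

Lemma cj_neq0 x : x != 0 -> cj x != 0.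
Proof. by rewrite cj_eq0. Qed.

Lemma tang_suff (s k a z : F) : s != 0 -> k ^+ 2 = 4%:R * (s * cj s) * a ->
  z * cj z = a -> cj s * z + s * cj z = k -> cj s * z = k / 2%:R.
Proof.
move=> s0 hk hn ht.
have h2 := two_neq0; have h4 := four_neq0.
have : (cj s * z - k / 2%:R) ^+ 2 = 0.
  have -> : (cj s * z - k / 2%:R) ^+ 2 = (cj s * z) ^+ 2 - k * (cj s * z) + k ^+ 2 / 4%:R.
    by field; rewrite h2 h4.
  by rewrite hk -ht -hn; field; rewrite h4.
by move/eqP; rewrite expf_eq0 /= subr_eq0 => /eqP.
Qed.

Lemma tang_nec (s k a : F) (X : {set option F}) : s != 0 -> #|X| = 1%N ->
  None \notin X ->
  (forall z, (Some z \in X) = (z * cj z == a) && (cj s * z + s * cj z == k)) ->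
  k ^+ 2 = 4%:R * (s * cj s) * a.
Proof.
move=> s0 /eqP/cards1P[[z|] hX] hN hz; last by rewrite hX set11 in hN.
have cs0 : cj s != 0 by rewrite cj_eq0.
have : Some z \in X by rewrite hX set11.
rewrite hz => /andP[/eqP hn /eqP ht].
have : Some (s * cj z / cj s) \in X.
  rewrite hz !cjM cjV !cjK; apply/andP; split; apply/eqP.
    by rewrite -hn; field; rewrite ?s0 ?cs0.
  by rewrite -ht; field; rewrite ?s0 ?cs0.
rewrite hX inE => /eqP [] hz'.
have e : s * cj z = cj s * z by rewrite -[in RHS]hz'; field; rewrite ?cs0.
have -> : 4%:R * (s * cj s) * a = 4%:R * (cj s * z) * (s * cj z) by rewrite -hn; ring.
by rewrite -ht e; ring.
Qed.

Lemma mem_c1 s c z : (Some z \in circle1 q s c) = ((z - s) * (cj z - cj s) == c).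
Proof. by rewrite inE. Qed.

Lemma mem_B a z : (Some z \in Bcirc q a) = (z * cj z == a).
Proof. by rewrite /Bcirc inE cj0 !subr0. Qed.

Lemma mem_c2 s c z : (Some z \in circle2 q s c) = (cj s * z + s * cj z == c).
Proof. by rewrite inE. Qed.

Lemma c1_B_eq s c a z : ((z - s) * (cj z - cj s) == c) && (z * cj z == a) =
  (z * cj z == a) && (cj s * z + s * cj z == a + s * cj s - c).
Proof.
case: (eqVneq (z * cj z) a) => h; rewrite ?andbF //= andbT.
apply/eqP/eqP => H.
  by rewrite -H -h; ring.
have -> : c = a + s * cj s - (cj s * z + s * cj z) by rewrite H; ring.
by rewrite -h; ring.
Qed.

Lemma inter1 (sc c a z0 : F) : sc != 0 ->
  (a + sc * cj sc - c) ^+ 2 = 4%:R * (sc * cj sc) * a ->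
  z0 * cj z0 = a -> (z0 - sc) * (cj z0 - cj sc) = c ->
  circle1 q sc c :&: Bcirc q a = [set Some z0].
Proof.
move=> s0 hk hn hc.
have cs0 : cj sc != 0 by rewrite cj_eq0.
have := c1_B_eq sc c a z0; rewrite hc hn !eqxx /= => /esym/eqP ht'.
apply/setP => [[z|]]; rewrite !inE //= ?cj0 ?subr0; last first.
apply/idP/idP => [|/eqP [->]]; last by rewrite hc hn !eqxx.
rewrite c1_B_eq => /andP[/eqP h1 /eqP h2].
have e1 := tang_suff _ _ _ _ s0 hk h1 h2; have e2 := tang_suff _ _ _ _ s0 hk hn ht'.
by apply/eqP; congr Some; apply: (mulfI cs0); rewrite e1 e2.
Qed.

Lemma tang_c1 s c a : s != 0 -> tangential (circle1 q s c) (Bcirc q a) ->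
  (a + s * cj s - c) ^+ 2 = 4%:R * (s * cj s) * a.
Proof.
move=> s0 /eqP h; apply: (tang_nec _ _ _ _ s0 h); first by rewrite !inE.
by move=> z; rewrite inE mem_c1 mem_B c1_B_eq.
Qed.

Lemma tang_c1_0 (c : F) : ~~ tangential (circle1 q 0 c) (Bcirc q 1).
Proof.
apply/negP => /cards1P [[z|] hX]; last first.
  by have := set11 (@None F); rewrite -hX !inE.
have := set11 (Some z); rewrite -hX inE mem_c1 mem_B cj0 !subr0 => /andP[h1 h2].
have : Some (- z) \in [set Some z].
  by rewrite -hX inE mem_c1 mem_B !cjN cj0 !subr0 !mulrNN h1 h2.
rewrite inE => /eqP [] /eqP; rewrite eq_sym -addr_eq0 -mulr2n -mulr_natr mulf_eq0 (negbTE two_neq0) orbF.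
by move=> /eqP z0; move: h2; rewrite z0 mul0r eq_sym oner_eq0.
Qed.

Lemma tang_c2 s c a : s != 0 -> tangential (circle2 q s c) (Bcirc q a) ->
  c ^+ 2 = 4%:R * (s * cj s) * a.
Proof.
move=> s0 /eqP h; apply: (tang_nec _ _ _ _ s0 h); first by rewrite !inE.
by move=> z; rewrite inE mem_c2 mem_B andbC.
Qed.

Lemma q_gt1 : (1 < q)%N.
Proof.
rewrite hq; have p1 := prime_gt1 hp.
by apply: (leq_trans p1); rewrite -{1}(expn1 p) leq_pexp2l // ltnW.
Qed.

Lemma card_B1 : #|[set P : F | Some P \in Bcirc q 1]| = q.+1.
Proof.
have q1 := q_gt1.
have n0 : (0 < q ^ 2 - 1)%N.
  by rewrite subn_gt0 (leq_trans q1) // -{1}(expn1 q) leq_pexp2l // ltnW.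
pose rs := enum [set~ (0 : F)].
have /hasP [z zin primz] : has (q ^ 2 - 1).-primitive_root rs.
  apply: has_prim_root => //.
  - apply/allP => x; rewrite mem_enum !inE => x0.
    rewrite unity_rootE; apply/eqP; apply: (mulfI x0).
    by rewrite -exprS subn1 prednK ?expn_gt0 ?(ltnW q1) // -hcard expf_card mulr1.
  - exact: enum_uniq.
  - by rewrite -cardE cardsC1 hcard subn1.
have dv : (q.+1 %| q ^ 2 - 1)%N.
  by rewrite -[(q ^ 2 - 1)%N]/(q ^ 2 - 1 ^ 2)%N subn_sqr addn1 dvdn_mull.
have primw := dvdn_prim_root primz dv.
set w := z ^+ _ in primw.
have -> : [set P : F | Some P \in Bcirc q 1] = [set w ^+ (val i) | i : 'I_q.+1].
  apply/setP => x; rewrite inE mem_B /conj -exprS.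
  apply/eqP/imsetP => [/(prim_rootP primw) [i ->] | [i _ ->]]; first by exists i.
  by rewrite exprAC (prim_expr_order primw) expr1n.
rewrite card_imset ?card_ord // => i j /eqP.
by rewrite (eq_prim_root_expr primw) !modn_small ?ltn_ord // => /eqP/val_inj.
Qed.

Lemma normP0 (P : F) : P * cj P = 1 -> P != 0.
Proof. by move=> h; apply/eqP => P0; move: h; rewrite P0 mul0r => /eqP; rewrite eq_sym oner_eq0. Qed.

Lemma fam_inter (r c0 a e P : F) : cj r = r -> r != 0 -> cj e = e -> P * cj P = 1 ->
  (a + r ^+ 2 - c0) ^+ 2 = 4%:R * r ^+ 2 * a -> e ^+ 2 = a -> (e - r) ^+ 2 = c0 ->
  circle1 q (r * P) c0 :&: Bcirc q a = [set Some (e * P)].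
Proof.
move=> cr r0 ce hP hk he hc.
have P0 := normP0 _ hP.
have N : r * P * cj (r * P) = r ^+ 2 by rewrite cjM cr -[RHS]mulr1 -hP; ring.
apply: inter1.
- by rewrite mulf_neq0.
- by rewrite N.
- by rewrite cjM ce -he -[RHS]mulr1 -hP; ring.
- by rewrite !cjM ce cr -hc -[RHS]mulr1 -hP; ring.
Qed.

Lemma fam_mem (r c0 a e P : F) : cj r = r -> r != 0 -> cj e = e -> P * cj P = 1 ->
  (a + r ^+ 2 - c0) ^+ 2 = 4%:R * r ^+ 2 * a -> e ^+ 2 = a -> (e - r) ^+ 2 = c0 ->
  Some (e * P) \in circle1 q (r * P) c0.
Proof.
move=> cr r0 ce hP hk he hc.
by have := set11 (Some (e * P)); rewrite -(fam_inter _ _ _ _ _ cr r0 ce hP hk he hc) inE => /andP[].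
Qed.

Lemma mainH (mu : F) (hmu : inGFq q mu) (hmu0 : mu != 0) (hb : mu ^+ 2 != 1) :
  let b := mu ^+ 2 in
  let s := (1 + mu) / 2%:R in
  let c := ((1 - mu) / 2%:R) ^+ 2 in
  let s' := (1 - mu) / 2%:R in
  let c' := ((1 + mu) / 2%:R) ^+ 2 in
  let B1 := Bcirc q 1 in
  let Bb := Bcirc q b in
  #|common_tangents q B1 Bb| = (2 * (q + 1))%N /\
  common_tangents q B1 Bb =
    [set E | [exists P : F, (Some P \in B1) && (E == circle1 q (s * P) c)]] :|:
    [set E | [exists P : F, (Some P \in B1) && (E == circle1 q (s' * P) c')]] /\
  (forall P : F, Some P \in B1 ->
     [/\ Some P \in circle1 q (s * P) c, Some (mu * P) \in circle1 q (s * P) c,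
         Some P \in circle1 q (s' * P) c' & Some (- mu * P) \in circle1 q (s' * P) c']).
Proof.
move=> b s c s' c' B1 Bb.
have cmu : cj mu = mu := eqP hmu.
have h2 := two_neq0.
have hm1 : (mu - 1) * (mu + 1) != 0.
  by rewrite (_ : (mu - 1) * (mu + 1) = mu ^+ 2 - 1) ?subr_eq0 //; ring.
have mum1 : mu - 1 != 0 by move: hm1; rewrite mulf_eq0 negb_or => /andP[].
have mup1 : mu + 1 != 0 by move: hm1; rewrite mulf_eq0 negb_or => /andP[].
have mum1' : 1 - mu != 0 by rewrite -opprB oppr_eq0.
have mup1' : 1 + mu != 0 by rewrite addrC.
have cs : cj s = s by rewrite /s cjM cjV cjD cj1 cjn cmu.
have cs' : cj s' = s' by rewrite /s' cjM cjV cjB cj1 cjn cmu.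
have s0 : s != 0 by rewrite /s mulf_neq0 ?invr_eq0.
have s0' : s' != 0 by rewrite /s' mulf_neq0 ?invr_eq0.
have cNmu : cj (- mu) = - mu by rewrite cjN cmu.
have k11 : (1 + s ^+ 2 - c) ^+ 2 = 4%:R * s ^+ 2 * 1 by rewrite /s /c; field.
have k1b : (b + s ^+ 2 - c) ^+ 2 = 4%:R * s ^+ 2 * b by rewrite /b /s /c; field.
have k21 : (1 + s' ^+ 2 - c') ^+ 2 = 4%:R * s' ^+ 2 * 1 by rewrite /s' /c'; field.
have k2b : (b + s' ^+ 2 - c') ^+ 2 = 4%:R * s' ^+ 2 * b by rewrite /b /s' /c'; field.
have e11 : (1 - s) ^+ 2 = c by rewrite /s /c; field.
have e1b : (mu - s) ^+ 2 = c by rewrite /s /c; field.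
have e21 : (1 - s') ^+ 2 = c' by rewrite /s' /c'; field.
have e2b : (- mu - s') ^+ 2 = c' by rewrite /s' /c'; field.
have sq1 : 1 ^+ 2 = 1 :> F by rewrite expr1n.
have sqb : mu ^+ 2 = b by [].
have sqb' : (- mu) ^+ 2 = b by rewrite sqrrN.
have I11 P (hP : P * cj P = 1) := fam_inter _ _ _ _ _ cs s0 cj1 hP k11 sq1 e11.
have I1b P (hP : P * cj P = 1) := fam_inter _ _ _ _ _ cs s0 cmu hP k1b sqb e1b.
have I21 P (hP : P * cj P = 1) := fam_inter _ _ _ _ _ cs' s0' cj1 hP k21 sq1 e21.
have I2b P (hP : P * cj P = 1) := fam_inter _ _ _ _ _ cs' s0' cNmu hP k2b sqb' e2b.
have M11 P (hP : P * cj P = 1) := fam_mem _ _ _ _ _ cs s0 cj1 hP k11 sq1 e11.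
have M1b P (hP : P * cj P = 1) := fam_mem _ _ _ _ _ cs s0 cmu hP k1b sqb e1b.
have M21 P (hP : P * cj P = 1) := fam_mem _ _ _ _ _ cs' s0' cj1 hP k21 sq1 e21.
have M2b P (hP : P * cj P = 1) := fam_mem _ _ _ _ _ cs' s0' cNmu hP k2b sqb' e2b.
have part3 : forall P : F, Some P \in B1 ->
     [/\ Some P \in circle1 q (s * P) c, Some (mu * P) \in circle1 q (s * P) c,
         Some P \in circle1 q (s' * P) c' & Some (- mu * P) \in circle1 q (s' * P) c'].
  move=> P; rewrite /B1 mem_B => /eqP hP.
  by split; [move: (M11 P hP) | exact: M1b | move: (M21 P hP) | exact: M2b]; rewrite mul1r.
have h4 := four_neq0.
have part2 : common_tangents q B1 Bb =
    [set E | [exists P : F, (Some P \in B1) && (E == circle1 q (s * P) c)]] :|: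
    [set E | [exists P : F, (Some P \in B1) && (E == circle1 q (s' * P) c')]].
  apply/setP => E; rewrite inE; apply/idP/idP.
    case/and3P => hc t1 tb.
    case/existsP: hc => s1 /existsP [c1 /orP [/and3P [_ c10 /eqP hE] | /and3P [s10 _ /eqP hE]]]; subst E.
      case: (eqVneq s1 0) => [s10 | s10]; first by move: t1; rewrite s10 /B1 (negbTE (tang_c1_0 _)).
      have h1 := tang_c1 _ _ _ s10 t1; have hb1 := tang_c1 _ _ _ s10 tb.
      have [t ht0] : exists t, t = s1 * cj s1 by eexists.
      rewrite -ht0 in h1 hb1.
      have e1 : (mu ^+ 2 - 1) * (mu ^+ 2 + 1 + 2%:R * (t - c1) - 4%:R * t) =
        ((b + t - c1) ^+ 2 - 4%:R * t * b) - ((1 + t - c1) ^+ 2 - 4%:R * t * 1).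
        by rewrite /b; ring.
      rewrite hb1 h1 !subrr ?subr0 in e1.
      move/eqP: e1; rewrite mulf_eq0 subr_eq0 (negbTE hb) /= => /eqP e2.
      have hc1 : c1 = (mu ^+ 2 + 1 - 2%:R * t) / 2%:R.
        apply/eqP; rewrite -subr_eq0; apply/eqP.
        have -> : c1 - (mu ^+ 2 + 1 - 2%:R * t) / 2%:R =
          - (mu ^+ 2 + 1 + 2%:R * (t - c1) - 4%:R * t) / 2%:R by field.
        by rewrite e2 oppr0 mul0r.
      have e3 : (4%:R * t - (1 + mu) ^+ 2) * (4%:R * t - (1 - mu) ^+ 2) =
          4%:R * ((1 + t - c1) ^+ 2 - 4%:R * t * 1).
        by rewrite hc1; field.
      rewrite h1 subrr mulr0 in e3.
      move/eqP: e3; rewrite mulf_eq0 => /orP [] /eqP e4.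
        have ht : t = s ^+ 2.
          apply/eqP; rewrite -subr_eq0; apply/eqP.
          have -> : t - s ^+ 2 = (4%:R * t - (1 + mu) ^+ 2) / 4%:R by rewrite /s; field; rewrite h2 h4.
          by rewrite e4 mul0r.
        have hc1' : c1 = c by rewrite hc1 ht /s /c; field.
        have hP : (s1 / s) * cj (s1 / s) = 1.
          rewrite cjM cjV cs.
          have -> : s1 / s * (cj s1 / s) = t / s ^+ 2 by rewrite ht0; field.
          by rewrite ht divff // expf_neq0.
        have -> : s1 = s * (s1 / s) by field.
        rewrite hc1' in_setU; apply/orP; left; rewrite inE; apply/existsP; exists (s1 / s).
        by rewrite /B1 mem_B hP !eqxx.
      have ht : t = s' ^+ 2.
        apply/eqP; rewrite -subr_eq0; apply/eqP.
        have -> : t - s' ^+ 2 = (4%:R * t - (1 - mu) ^+ 2) / 4%:R by rewrite /s'; field; rewrite h2 h4.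
        by rewrite e4 mul0r.
      have hc1' : c1 = c' by rewrite hc1 ht /s' /c'; field.
      have hP : (s1 / s') * cj (s1 / s') = 1.
        rewrite cjM cjV cs'.
        have -> : s1 / s' * (cj s1 / s') = t / s' ^+ 2 by rewrite ht0; field.
        by rewrite ht divff // expf_neq0.
      have -> : s1 = s' * (s1 / s') by field.
      rewrite hc1' in_setU; apply/orP; right; rewrite inE; apply/existsP; exists (s1 / s').
      by rewrite /B1 mem_B hP !eqxx.
    have h1 := tang_c2 _ _ _ s10 t1; have hb1 := tang_c2 _ _ _ s10 tb.
    have t0 : s1 * cj s1 != 0 by rewrite mulf_neq0 ?cj_eq0.
    have : 4%:R * (s1 * cj s1) * (b - 1) = 0 by rewrite mulrBr -hb1 -h1 subrr.
    by move/eqP; rewrite !mulf_eq0 subr_eq0 (negbTE hb) cj_eq0 (negbTE s10) (negbTE h4).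
  rewrite in_setU => /orP [] ; rewrite inE => /existsP [P /andP [hP /eqP ->]];
    move: hP; rewrite /B1 mem_B => /eqP hP; apply/and3P; split.
  - apply/existsP; exists (s * P); apply/existsP; exists c; rewrite eqxx !andbT.
    apply/orP; left; apply/andP; split.
      by change (cj c == c); rewrite /c expr2 !cjM cjV cjB cj1 cjn cmu.
    by rewrite /c expf_neq0 // mulf_neq0 ?invr_eq0.
  - by rewrite /tangential /B1 I11 // cards1.
  - by rewrite /tangential /Bb I1b // cards1.
  - apply/existsP; exists (s' * P); apply/existsP; exists c'; rewrite eqxx !andbT.
    apply/orP; left; apply/andP; split.
      by change (cj c' == c'); rewrite /c' expr2 !cjM cjV cjD cj1 cjn cmu.
    by rewrite /c' expf_neq0 // mulf_neq0 ?invr_eq0.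
  - by rewrite /tangential /B1 I21 // cards1.
  - by rewrite /tangential /Bb I2b // cards1.
split; last by split.
set D := [set P : F | Some P \in B1].
have U1E : [set E | [exists P : F, (Some P \in B1) && (E == circle1 q (s * P) c)]] =
    [set circle1 q (s * P) c | P in D].
  apply/setP => E; rewrite inE; apply/existsP/imsetP => [[P /andP[hP /eqP ->]] | [P hP ->]].
    by exists P => //; rewrite /D inE.
  by exists P; rewrite inE in hP; rewrite hP eqxx.
have U2E : [set E | [exists P : F, (Some P \in B1) && (E == circle1 q (s' * P) c')]] =
    [set circle1 q (s' * P) c' | P in D].
  apply/setP => E; rewrite inE; apply/existsP/imsetP => [[P /andP[hP /eqP ->]] | [P hP ->]].
    by exists P => //; rewrite /D inE.
  by exists P; rewrite inE in hP; rewrite hP eqxx.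
have disj : [set circle1 q (s * P) c | P in D] :&: [set circle1 q (s' * P) c' | P in D] = set0.
  apply/setP => E; rewrite inE in_set0; apply/negP => /andP [/imsetP [P hP ->] /imsetP [Q hQ e]].
  move: hP hQ; rewrite /D !in_set cj0 !subr0 => /eqP hP /eqP hQ.
  have := I11 P hP; rewrite e (I21 Q hQ) => /set1_inj [] ; rewrite !mul1r => PQ.
  have := I1b P hP; rewrite e (I2b Q hQ) PQ => /set1_inj [] /eqP.
  rewrite mulNr eq_sym -addr_eq0 -mulr2n -mulr_natr !mulf_eq0 (negbTE h2) (negbTE hmu0).
  by rewrite (negbTE (normP0 _ hP)).
rewrite part2 U1E U2E cardsU disj cards0 subn0.
have cD : #|D| = q.+1 by rewrite /D /B1 card_B1.
rewrite !card_in_imset ?cD ?addn1 ?mul2n ?addnn //.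
  move=> P Q; rewrite /D !in_set cj0 !subr0 => /eqP hP /eqP hQ e.
  by have := I21 P hP; rewrite e (I21 Q hQ) => /set1_inj [] ; rewrite !mul1r.
move=> P Q; rewrite /D !in_set cj0 !subr0 => /eqP hP /eqP hQ e.
by have := I11 P hP; rewrite e (I11 Q hQ) => /set1_inj [] ; rewrite !mul1r.
Qed.

End H.

Theorem mainTheorem6 (p m q : nat) (F : finFieldType)
  (hp : prime p) (hpodd : odd p) (hm : (1 <= m)%N) (hq : q = (p ^ m)%N)
  (hchar : p \in [pchar F]) (hcard : #|F| = (q ^ 2)%N)
  (mu : F) (hmu : inGFq q mu) (hmu0 : mu != 0) (hb : mu ^+ 2 != 1) :
  let b := mu ^+ 2 in
  let s := (1 + mu) / 2%:R in
  let c := ((1 - mu) / 2%:R) ^+ 2 in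
  let s' := (1 - mu) / 2%:R in
  let c' := ((1 + mu) / 2%:R) ^+ 2 in
  let B1 := Bcirc q 1 in
  let Bb := Bcirc q b in
  #|common_tangents q B1 Bb| = (2 * (q + 1))%N /\
  common_tangents q B1 Bb =
    [set E | [exists P : F, (Some P \in B1) && (E == circle1 q (s * P) c)]] :|:
    [set E | [exists P : F, (Some P \in B1) && (E == circle1 q (s' * P) c')]] /\
  (forall P : F, Some P \in B1 ->
     [/\ Some P \in circle1 q (s * P) c, Some (mu * P) \in circle1 q (s * P) c,
         Some P \in circle1 q (s' * P) c' & Some (- mu * P) \in circle1 q (s' * P) c']).
Proof. exact: (@mainH p m q F hp hpodd hm hq hchar hcard mu hmu hmu0 hb). Qed.
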